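(* Let $\nu\ge3$ be a square-free integer with $\nu\equiv2$ or $3\pmod 4$, and for $n\ge0$ let $P_n(t)=(t^2-\nu)^{\circ n}\in\mathbb{Z}[t]$ (so $P_0(t)=t$). For $n\ge1$ write $P_n(t)=R_n(t)t^4+D_nt^2+C_n$ with $R_n\in\mathbb{Z}[t]$ and $D_n,C_n\in\mathbb{Z}$. Let $p$ be an odd prime not dividing $\nu$ such that $p$ divides $C_n$ for some $n\ge1$, and let $n(p)$ be the least positive integer $n$ with $p\mid C_n$. Then for every $n\ge0$, the polynomial $\bar P_n^2\,\bar R_{n(p)}(\bar P_n)+\bar D_{n(p)}\in\mathbb{F}_p[t]$ is separable (has no repeated irreducible factor).
   Context: Bars denote reduction modulo $p$. *)

(* Defs.v *)
From HB Require Import structures.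
From mathcomp Require Import all_boot all_order all_algebra all_field.
Set Implicit Arguments. Unset Strict Implicit. Unset Printing Implicit Defensive.
Import Order.TTheory GRing.Theory Num.Theory.
Local Open Scope ring_scope.

Definition squarefree (n : nat) : Prop :=
  forall q : nat, prime q -> ~~ (q * q %| n)%N.

Definition Pn (nu : nat) (n : nat) : {poly int} :=
  iter n (fun q : {poly int} => q ^+ 2 - (nu%:Z)%:P) 'X.

(* P_n = R_n t^4 + D_n t^2 + C_n *)
Definition Rn (nu n : nat) : {poly int} := drop_poly 4 (Pn nu n).
Definition Dn (nu n : nat) : int := (Pn nu n)`_2.
Definition Cn (nu n : nat) : int := (Pn nu n)`_0.

Definition redp (p : nat) (q : {poly int}) : {poly 'F_p} :=
  map_poly (fun z : int => z%:~R : 'F_p) q.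

(* Main.v *)
Require Import Defs.
From HB Require Import structures.
From mathcomp Require Import all_boot all_order all_algebra all_field.
From mathcomp Require Import ring zify.
Import Order.TTheory GRing.Theory Num.Theory.
Local Open Scope ring_scope.

Section Gen.
Variable (L : fieldType) (nu : nat).

Definition PL k : {poly L} := map_poly (intr : int -> L) (Pn nu k).

Lemma PLS k : PL k.+1 = PL k ^+ 2 - (nu%:R)%:P.
Proof.
by rewrite /PL /Pn iterS rmorphB rmorphXn /= map_polyC.
Qed.

Lemma PL0 : PL 0 = 'X.
Proof. by rewrite /PL /Pn /= map_polyX. Qed.

Lemma PL_add a b : PL (a + b) = PL a \Po PL b.
Proof.
elim: a => [|a IH]; first by rewrite add0n PL0 comp_polyX.
by rewrite addSn !PLS IH comp_polyB comp_polyC !expr2 comp_polyM.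
Qed.

Lemma PL_addv a b x : (PL (a + b)).[x] = (PL a).[(PL b).[x]].
Proof. by rewrite PL_add horner_comp. Qed.

Lemma PL_deriv k : (PL k)^`() = \prod_(j < k) (PL j *+ 2).
Proof.
elim: k => [|k IH]; first by rewrite PL0 derivX big_ord0.
rewrite PLS derivB derivC subr0 expr2 derivM IH big_ord_recr /=.
by rewrite mulr2n mulrDr mulrC.
Qed.

Lemma sq_coefs (q : {poly L}) c :
  [/\ (q ^+ 2 - c%:P)`_0 = q`_0 ^+ 2 - c,
      (q ^+ 2 - c%:P)`_1 = 2%:R * q`_0 * q`_1,
      (q ^+ 2 - c%:P)`_2 = 2%:R * q`_0 * q`_2 + q`_1 * q`_1 &
      (q ^+ 2 - c%:P)`_3 = 2%:R * (q`_0 * q`_3 + q`_1 * q`_2)].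
Proof.
rewrite !coefB !coefC /= expr2 !coefM.
rewrite !big_ord_recr !big_ord0 /= !add0r !subr0.
split; ring.
Qed.

Lemma PL_coefs k :
  [/\ (PL k.+1)`_1 = 0, (PL k.+1)`_3 = 0 &
      (PL k.+1)`_2 = if k is k'.+1 then 2%:R * (PL k)`_0 * (PL k)`_2 else 1].
Proof.
elim: k => [|k [IH1 IH3 IH2]].
  have [_ h1 h2 h3] := sq_coefs (PL 0) (nu%:R).
  rewrite PLS h1 h2 h3 PL0 !coefX /=; split; ring.
have [_ h1 h2 h3] := sq_coefs (PL k.+1) (nu%:R).
rewrite PLS h1 h2 h3 IH1 IH3; split; ring.
Qed.

End Gen.

Section Main.
Variable (L : closedFieldType) (nu N : nat).
Hypothesis two_neq0 : (2%:R : L) != 0.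
Hypothesis N_gt0 : (0 < N)%N.
Hypothesis zN : (PL L nu N).[0] = 0.
Hypothesis zmin : forall m, (0 < m)%N -> (m < N)%N -> (PL L nu m).[0] != 0.

Local Notation P := (PL L nu).

Lemma zaN a : (P (a * N)).[0] = 0.
Proof.
elim: a => [|a IH]; first by rewrite mul0n PL0 hornerX.
by rewrite mulSn PL_addv IH.
Qed.

Lemma zdiv j : (P j).[0] = 0 -> (N %| j)%N.
Proof.
rewrite {1}(divn_eq j N) addnC PL_addv zaN => h.
rewrite /dvdn; case: (posnP (j %% N)) => [//|pos].
by move: (zmin _ pos (ltn_pmod j N_gt0)); rewrite h eqxx.
Qed.

Lemma D_neq0 k : (0 < k)%N -> (k <= N)%N -> (P k)`_2 != 0.
Proof.
elim: k => [//|[|k] IH] _ le.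
  by have [_ _ ->] := PL_coefs L nu 0; rewrite oner_neq0.
have [_ _ ->] := PL_coefs L nu k.+1.
rewrite !mulf_neq0 // ?IH // ?(ltnW le) // -horner_coef0 zmin //.
Qed.

Definition RL := map_poly (intr : int -> L) (Rn nu N).
Definition DL := ((Dn nu N)%:~R : L).

Lemma DL_eq : DL = (P N)`_2.
Proof. by rewrite /DL /PL coef_map. Qed.

Lemma PN_eq : P N = RL * 'X^4 + DL%:P * 'X^2.
Proof.
rewrite /RL DL_eq /Rn; move: zN; rewrite -(prednK N_gt0) => z0.
have [c1 c3 _] := PL_coefs L nu N.-1.
apply/polyP => i; rewrite coefD coefMXn coefCM coefXn.
rewrite [(map_poly _ (drop_poly _ _))`__]coef_map /= coef_drop_poly -coef_map -/(PL L nu N.-1.+1).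
case: i => [|[|[|[|i]]]] /=; rewrite ?mulr0 ?mulr1 ?add0r ?addr0 //.
- by rewrite -horner_coef0 z0.
- by rewrite subnK.
Qed.


Definition GL n := P n ^+ 2 * (RL \Po P n) + DL%:P.

Lemma H_eq n : P (N + n) = P n ^+ 2 * GL n.
Proof.
rewrite PL_add PN_eq comp_polyD !comp_polyM comp_polyC !comp_polyX /GL.
ring.
Qed.

Lemma sepGL n : separable_poly (GL n).
Proof.
rewrite unlock /coprimep.
apply: contraT => /closed_rootP [x]; rewrite root_gcd => /andP [/rootP G0 /rootP G'0].
have H'0 : ((P (N + n))^`()).[x] = 0.
  by rewrite H_eq derivM hornerD !hornerM G0 G'0 !mulr0 addr0.
move: H'0; rewrite PL_deriv horner_prod => /eqP /prodf_eq0 [k _].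
rewrite hornerMn -mulr_natr mulf_eq0 (negbTE two_neq0) orbF => /eqP Pk0.
have hk : (k < N + n)%N := ltn_ord k.
have zm : (P (N + n - k)).[0] = 0.
  by rewrite -Pk0 -PL_addv subnK ?(ltnW hk) // H_eq hornerM G0 mulr0.
have dv := zdiv _ zm.
have leNm : (N <= N + n - k)%N by apply: dvdn_leq => //; rewrite subn_gt0.
have Pn0 : (P n).[x] = 0.
  have -> : P n = P ((N + n - k - N) + k) by congr P; lia.
  by rewrite PL_addv Pk0 -(divnK (dvdn_sub dv (dvdnn N))) zaN.
move: G0; rewrite /GL hornerD hornerM horner_exp Pn0 hornerC expr0n /= mul0r add0r.
move=> e; move: (D_neq0 _ N_gt0 (leqnn N)); by rewrite -DL_eq e eqxx.
Qed.

End Main.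

Theorem lemma4p7 (nu : nat) (p : nat) (np : nat) :
  (3 <= nu)%N -> squarefree nu -> (nu %% 4 == 2)%N || (nu %% 4 == 3)%N ->
  prime p -> odd p -> ~~ (p %| nu)%N ->
  (0 < np)%N -> (p%:Z %| Cn nu np)%Z ->
  (forall m : nat, (0 < m)%N -> (m < np)%N -> ~~ (p%:Z %| Cn nu m)%Z) ->
  forall n : nat,
    separable_poly
      (redp p (Pn nu n) ^+ 2 * (redp p (Rn nu np) \Po redp p (Pn nu n))
       + ((Dn nu np)%:~R : 'F_p)%:P).
Proof.
move=> _ _ _ pr op _ np_gt0 dC dCmin n.
have [K [iota _]] := countable_algebraic_closure 'F_p.
have pch : p \in [pchar K] := rmorph_pchar iota (pchar_Fp pr).
have two : (2%:R : K) != 0.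
  rewrite -(dvdn_pcharf pch); apply/negP => /(dvdn_leq (isT : (0 < 2)%N)) le2.
  have p2 : p != 2%N by apply: contraTneq op => ->.
  have := prime_gt1 pr; lia.
have zE m : (PL K nu m).[0] = (Cn nu m)%:~R.
  by rewrite horner_coef0 /PL coef_map.
have zN : (PL K nu np).[0] = 0 by rewrite zE; apply/eqP; rewrite -(dvdz_pcharf pch).
have zmin m : (0 < m)%N -> (m < np)%N -> (PL K nu m).[0] != 0.
  by move=> h1 h2; rewrite zE -(dvdz_pcharf pch) dCmin.
rewrite -(separable_map iota).
have mE q : map_poly iota (redp p q) = map_poly (intr : int -> K) q.
  by rewrite /redp -map_poly_comp; apply: eq_map_poly => z /=; rewrite rmorph_int.
rewrite rmorphD rmorphM rmorphXn /= map_comp_poly map_polyC /= !mE rmorph_int.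
exact: (@sepGL K nu np two np_gt0 zN zmin n).
Qed.
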